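(* For every $n\ge1$, with $M_n$ the array indexed by $\{0,\dots,n\}^3$ defined by $(M_n)_{i,j,k}=\min\big(k\min(i,j),\ ij-(n-k)\max(0,i+j-n)\big)$, $$\sum_{0\le i,j,k\le n}(M_n)_{i,j,k}=\frac{69n^5+180n^4+170n^3+60n^2+4^{1+(-1)^n}\,n}{480}.$$
   Context: $M_n$ is the minimum element of the lattice of corner-sum hypermatrices of order $n$ (ordered by reverse entrywise comparison), i.e. the entrywise largest corner-sum hypermatrix. *)

(* Defs.v *)
From mathcomp Require Import all_boot all_order all_algebra.
Set Implicit Arguments. Unset Strict Implicit. Unset Printing Implicit Defensive.
Import Order.TTheory GRing.Theory Num.Theory.
Local Open Scope ring_scope.

Definition Mentry (n i j k : nat) : int :=
  Num.min ((k%:Z) * (Num.min (i%:Z) (j%:Z)))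
          ((i%:Z) * (j%:Z) - ((n%:Z) - (k%:Z)) * (Num.max 0 ((i%:Z) + (j%:Z) - (n%:Z)))).

(* Main.v *)
Require Import Defs.
From mathcomp Require Import all_boot all_order all_algebra.
From mathcomp Require Import ring lra zify.
Import Order.TTheory GRing.Theory Num.Theory.
Local Open Scope ring_scope.

Lemma natzr (k : nat) : ((k%:Z)%:~R : rat) = k%:R.
Proof. by []. Qed.

Lemma Msym n i j k : Mentry n i j k = Mentry n j i k.
Proof. by rewrite /Mentry [Num.min i%:Z _]minC [i%:Z * _]mulrC [i%:Z + _]addrC. Qed.

Lemma MA n a b k : (a <= b)%N -> (a + b <= n)%N -> (k <= b)%N ->
  (Mentry n a b k)%:~R = k%:R * a%:R :> rat.
Proof.
move=> hab habn hk; rewrite /Mentry (min_l (_ : a%:Z <= b%:Z)) ?lez_nat //.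
rewrite (max_l (_ : a%:Z + b%:Z - n%:Z <= 0)); last by lia.
rewrite mulr0 subr0 min_l; first by rewrite intrM.
nia.
Qed.

Lemma MB n a b k : (a <= b)%N -> (a + b <= n)%N -> (b <= k)%N ->
  (Mentry n a b k)%:~R = a%:R * b%:R :> rat.
Proof.
move=> hab habn hk; rewrite /Mentry (min_l (_ : a%:Z <= b%:Z)) ?lez_nat //.
rewrite (max_l (_ : a%:Z + b%:Z - n%:Z <= 0)); last by lia.
rewrite mulr0 subr0 min_r; first by rewrite intrM.
nia.
Qed.

Lemma MC n a b k : (a <= b)%N -> (n < a + b)%N -> (b <= n)%N -> (k <= n - a)%N ->
  (Mentry n a b k)%:~R = k%:R * a%:R :> rat.
Proof.
move=> hab habn hb hk; rewrite /Mentry (min_l (_ : a%:Z <= b%:Z)) ?lez_nat //.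
rewrite (max_r (_ : 0 <= a%:Z + b%:Z - n%:Z)); last by lia.
rewrite min_l; first by rewrite intrM.
nia.
Qed.

Lemma MD n a b k : (a <= b)%N -> (n < a + b)%N -> (b <= n)%N -> (n - a <= k)%N -> (k <= n)%N ->
  (Mentry n a b k)%:~R = a%:R * b%:R - (n%:R - k%:R) * (a%:R + b%:R - n%:R) :> rat.
Proof.
move=> hab habn hb hk hkn; rewrite /Mentry (min_l (_ : a%:Z <= b%:Z)) ?lez_nat //.
rewrite (max_r (_ : 0 <= a%:Z + b%:Z - n%:Z)); last by lia.
rewrite min_r; first by rewrite !(intrM, intrB, intrD).
nia.
Qed.

Lemma natS (k : nat) : (k.+1%:R : rat) = k%:R + 1.
Proof. by rewrite natr1. Qed.

Lemma sum_tel (f : nat -> rat) (G : rat -> rat) (c d : nat) : (c <= d)%N ->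
  (forall k, (c <= k)%N -> (k < d)%N -> f k = G (k%:R + 1) - G k%:R) ->
  \sum_(c <= k < d) f k = G d%:R - G c%:R.
Proof.
elim: d => [|d IH] hcd hf.
  by move: hcd; rewrite leqn0 => /eqP ->; rewrite big_geq // subrr.
case: (ltngtP c d.+1) hcd => // [hlt|->] _; last by rewrite big_geq // subrr.
have hcd : (c <= d)%N by lia.
rewrite big_nat_recr //= IH //; last by move=> k h1 h2; apply: hf => //; lia.
rewrite (hf d) //. rewrite natr1 addrC addrA subrK. by []. Qed.


Definition F1 (n a b : rat) : rat := a * (b * (b + 1) / 2 + b * (n - b)).
Definition F2 (n a b : rat) : rat :=
  a * (n - a) * (n - a + 1) / 2 + a * a * b - (a + b - n) * a * (a - 1) / 2.

Lemma Fk1 n a b : (a <= b)%N -> (a + b <= n)%N ->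
  \sum_(k < n.+1) ((Mentry n a b k)%:~R : rat) = F1 n%:R a%:R b%:R.
Proof.
move=> hab habn.
rewrite -(big_mkord xpredT (fun k => (Mentry n a b k)%:~R : rat)).
rewrite (big_cat_nat _ (n:=b.+1)) //=; last by lia.
rewrite (sum_tel _ (fun x => a%:R * x * (x - 1) / 2)) //; last first.
  by move=> k h1 h2; rewrite MA //; [by field|..]; lia.
rewrite (sum_tel _ (fun x => a%:R * b%:R * x)) //; last first.
  by move=> k h1 h2; rewrite MB //; [by field|..]; lia.
all: try lia.
rewrite -(@natr1 rat b) -(@natr1 rat n) /F1; by field.
Qed.

Lemma Fk2 n a b : (a <= b)%N -> (n < a + b)%N -> (b <= n)%N ->
  \sum_(k < n.+1) ((Mentry n a b k)%:~R : rat) = F2 n%:R a%:R b%:R.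
Proof.
move=> hab habn hbn.
rewrite -(big_mkord xpredT (fun k => (Mentry n a b k)%:~R : rat)).
rewrite (big_cat_nat _ (n:=(n - a).+1)) //=; last by lia.
rewrite (sum_tel _ (fun x => a%:R * x * (x - 1) / 2)) //; last first.
  by move=> k h1 h2; rewrite MC //; [by field|..]; lia.
rewrite (sum_tel _ (fun x => a%:R * b%:R * x - (a%:R + b%:R - n%:R) * (n%:R * x - x * (x - 1) / 2))) //; last first.
  by move=> k h1 h2; rewrite MD //; [by field|..]; lia.
all: try lia.
rewrite -(@natr1 rat (n-a)) -(@natr1 rat n) natrB /F2; last by lia. by field.
Qed.
Definition G1 (n i j : rat) : rat := (-1%:~R * i * j + 1%:R * i * j^+2 + 1%:R * i^+2 * j + -1%:~R * i^+2 * j^+2 + -2%:~R * n * i * j + 2%:R * n * i * j^+2) / 4%:R.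
Definition G2 (n i j : rat) : rat := (-2%:~R * i * j + 3%:R * i * j^+2 + -1%:~R * i * j^+3 + -3%:~R * n * i * j + 3%:R * n * i * j^+2) / 6%:R.
Definition G3 (n i j : rat) : rat := (-1%:~R * i * j + 1%:R * i * j^+2 + -1%:~R * i^+2 * j + 1%:R * i^+2 * j^+2 + -2%:~R * n * i^+2 * j + 2%:R * n^+2 * i * j) / 4%:R.
Definition G4 (n i j : rat) : rat := (-2%:~R * i * j + 2%:R * i * j^+3 + -1%:~R * n * j + 3%:R * n * j^+2 + -2%:~R * n * j^+3 + -3%:~R * n^+2 * j + 3%:R * n^+2 * j^+2) / 12%:R.
Definition Kl (n i : rat) : rat := (2%:R * i + -5%:~R * i^+2 + 5%:R * i^+4 + -2%:~R * i^+5 + -5%:~R * n * i + 5%:R * n * i^+2 + -15%:~R * n^+2 * i + 15%:R * n^+2 * i^+2 + -10%:~R * n^+3 * i + 10%:R * n^+3 * i^+2) / 60%:R.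
Definition Kh (n i : rat) : rat := (2%:R * i + -5%:~R * i^+2 + 5%:R * i^+4 + -2%:~R * i^+5 + 10%:R * n * i^+2 + -20%:~R * n * i^+3 + 10%:R * n * i^+4 + -20%:~R * n^+2 * i + 45%:R * n^+2 * i^+2 + -20%:~R * n^+2 * i^+3 + -25%:~R * n^+3 * i + 25%:R * n^+3 * i^+2 + -5%:~R * n^+4 * i) / 60%:R.

Definition Hl (n i : rat) : rat :=
  G1 n i i - G1 n i 0 + (G2 n i (n - i + 1) - G2 n i i) + (G3 n i (n + 1) - G3 n i (n - i + 1)).
Definition Hh (n i : rat) : rat :=
  G1 n i (n - i + 1) - G1 n i 0 + (G4 n i i - G4 n i (n - i + 1)) + (G3 n i (n + 1) - G3 n i i).

Definition FF n i j := \sum_(k < n.+1) ((Mentry n i j k)%:~R : rat).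

Lemma FFsym n i j : FF n i j = FF n j i.
Proof. by apply: eq_bigr => k _; rewrite Msym. Qed.

Lemma Hlow n i : (i + i <= n)%N ->
  \sum_(j < n.+1) FF n i j = Hl n%:R i%:R.
Proof.
move=> hi.
rewrite -(big_mkord xpredT (fun j => FF n i j)).
rewrite (big_cat_nat _ (n:=i)) //=; last by lia.
rewrite (big_cat_nat _ (n:=(n - i).+1) (m:=i)) //=; [|lia|lia].
rewrite (sum_tel _ (G1 n%:R i%:R)) //; last first.
  move=> j h1 h2; rewrite FFsym /FF Fk1; [|lia|lia]. by rewrite /F1 /G1; field.
all: try lia.
rewrite (sum_tel _ (G2 n%:R i%:R)) //; last first.
  move=> j h1 h2; rewrite /FF Fk1; [|lia|lia]. by rewrite /F1 /G2; field.
all: try lia.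
rewrite (sum_tel _ (G3 n%:R i%:R)) //; last first.
  move=> j h1 h2; rewrite /FF Fk2; [|lia|lia|lia]. by rewrite /F2 /G3; field.
all: try lia.
rewrite /Hl -(@natr1 rat (n-i)) -(@natr1 rat n) natrB //; [by rewrite !addrA | lia].
Qed.

Lemma Hhigh n i : (n < i + i)%N -> (i <= n)%N ->
  \sum_(j < n.+1) FF n i j = Hh n%:R i%:R.
Proof.
move=> hi hin.
rewrite -(big_mkord xpredT (fun j => FF n i j)).
rewrite (big_cat_nat _ (n:=(n - i).+1)) //=; last by lia.
rewrite (big_cat_nat _ (n:=i) (m:=(n - i).+1)) //=; [|lia|lia].
rewrite (sum_tel _ (G1 n%:R i%:R)) //; last first.
  move=> j h1 h2; rewrite FFsym /FF Fk1; [|lia|lia]. by rewrite /F1 /G1; field.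
all: try lia.
rewrite (sum_tel _ (G4 n%:R i%:R)) //; last first.
  move=> j h1 h2; rewrite FFsym /FF Fk2; [|lia|lia|lia]. by rewrite /F2 /G4; field.
all: try lia.
rewrite (sum_tel _ (G3 n%:R i%:R)) //; last first.
  move=> j h1 h2; rewrite /FF Fk2; [|lia|lia|lia]. by rewrite /F2 /G3; field.
all: try lia.
rewrite /Hh -(@natr1 rat (n-i)) -(@natr1 rat n) natrB //; rewrite ?addrA //.
Qed.

Lemma total n m : (m * 2 <= n)%N -> (n <= m * 2 + 1)%N ->
  \sum_(i < n.+1) \sum_(j < n.+1) FF n i j =
  Kl n%:R (m%:R + 1) - Kl n%:R 0 + (Kh n%:R (n%:R + 1) - Kh n%:R (m%:R + 1)).
Proof.
move=> h1 h2.
rewrite -(big_mkord xpredT (fun i => \sum_(j < n.+1) FF n i j)).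
rewrite (big_cat_nat _ (n:=m.+1)) //=; last by lia.
rewrite (sum_tel _ (Kl n%:R)) //; last first.
  move=> i hi1 hi2; rewrite Hlow; last by lia.
  by rewrite /Hl /Kl /G1 /G2 /G3; field.
all: try lia.
rewrite (sum_tel _ (Kh n%:R)) //; last first.
  move=> i hi1 hi2; rewrite Hhigh; [|lia|lia].
  by rewrite /Hh /Kh /G1 /G4 /G3; field.
all: try lia.
by rewrite -(@natr1 rat m) -(@natr1 rat n).
Qed.

Lemma cast_sum n :
  ((\sum_(i < n.+1) \sum_(j < n.+1) \sum_(k < n.+1) Mentry n i j k)%:~R : rat) =
  \sum_(i < n.+1) \sum_(j < n.+1) FF n i j.
Proof.
rewrite (big_morph (fun x : int => (x%:~R : rat)) (@intrD _) (mulr0z 1)).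
apply: eq_bigr => i _.
rewrite (big_morph (fun x : int => (x%:~R : rat)) (@intrD _) (mulr0z 1)).
apply: eq_bigr => j _.
by rewrite (big_morph (fun x : int => (x%:~R : rat)) (@intrD _) (mulr0z 1)).
Qed.

Theorem mainTheorem10 (n : nat) (hn : (1 <= n)%N) :
  ((\sum_(i < n.+1) \sum_(j < n.+1) \sum_(k < n.+1) Mentry n i j k)%:~R : rat) =
  (69 * n%:R ^+ 5 + 180 * n%:R ^+ 4 + 170 * n%:R ^+ 3 + 60 * n%:R ^+ 2
    + (4 : rat) ^ (1 + (-1) ^+ n : int) * n%:R) / 480.
Proof.
rewrite cast_sum.
have [m [hm|hm]] : exists m, n = (m * 2)%N \/ n = (m * 2 + 1)%N.
  by exists (n %/ 2)%N; lia.
- rewrite (@total n m); [|lia|lia].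
  rewrite hm -signr_odd oddM /= andbF /=.
  change ((4 : rat) ^ (2%:Z)) with ((4 : rat) ^+ 2).
  rewrite natrM /Kl /Kh. by field.
- rewrite (@total n m); [|lia|lia].
  rewrite hm -signr_odd oddD oddM /= andbF /=.
  change ((4 : rat) ^ (1 + (-1) ^+ 1 : int)) with ((4 : rat) ^+ 0).
  rewrite natrD natrM /Kl /Kh. by field.
Qed.
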